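(* In the setting below, $\operatorname{length}_{\mathcal{O}}\Phi_{\lambda_A}(A) = (n-t)\,w_{\mathbf{a}}$.
   Context: Let $\mathcal{O}$ be a discrete valuation ring with uniformiser $\varpi$ and normalised valuation $\nu$. Let $2\le m\le n$, $t=m-1$, $P=\mathcal{O}[X_{m\times n}]$ (polynomial ring in the entries of an $m\times n$ matrix of indeterminates $X$), and $A=P/\mathrm{I}_m(X)$, where $\mathrm{I}_k$ denotes the ideal of $k\times k$ minors. Fix integers $0\le a_1\le\cdots\le a_t$, $D=\operatorname{diag}(\varpi^{a_1},\ldots,\varpi^{a_t})$, $\Delta=\det D$. Let $\mathbf{a}\in\mathcal{O}^{m\times n}$ have zero last row and top $t$ entries of column $j$ equal to the $r$-th column of $D$, where $1\le r\le t$, $r\equiv j\pmod t$. Let $\lambda_A\colon A\to\mathcal{O}$ be the $\mathcal{O}$-algebra map induced by $X_{ij}\mapsto\mathbf{a}_{ij}$. For $\mathfrak{p}=\ker\lambda_A$, $\Phi_{\lambda_A}(A)=\operatorname{tors}(\mathfrak{p}/\mathfrak{p}^2)$. $w_{\mathbf{a}}=\nu(\Delta)=\operatorname{length}_{\mathcal{O}}(\mathcal{O}/\mathrm{I}_t(\mathbf{a}))$. *)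

(* Defs.v *)
From HB Require Import structures.
From mathcomp Require Import all_boot all_order all_algebra.
From mathcomp Require Import mpoly.
Set Implicit Arguments. Unset Strict Implicit. Unset Printing Implicit Defensive.
Import Order.TTheory GRing.Theory Num.Theory.
Local Open Scope ring_scope.

(* [dvr_val pi x k] : x = u * pi^k with u a unit, i.e. nu(x) = k. *)
Definition dvr_val (R : idomainType) (pi x : R) (k : nat) : Prop :=
  exists2 u : R, u \is a GRing.unit & x = u * pi ^+ k.

Definition is_dvr_uniformiser (R : idomainType) (pi : R) : Prop :=
  [/\ pi != 0, pi \isn't a GRing.unit &
      forall x : R, x != 0 -> exists k, dvr_val pi x k].

Section Alg.
Variables (R : comNzRingType) (P : comAlgType R).

Definition is_submod (S : P -> Prop) : Prop :=
  [/\ S 0, (forall x y, S x -> S y -> S (x + y)) &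
      (forall (c : R) x, S x -> S (c *: x))].

Definition is_ideal (J : P -> Prop) : Prop :=
  [/\ J 0, (forall x y, J x -> J y -> J (x + y)) &
      (forall (g : P) x, J x -> J (g * x))].

Definition ideal_gen (S : P -> Prop) : P -> Prop :=
  fun x => forall J, is_ideal J -> (forall s, S s -> J s) -> J x.

Definition subsetP (A B : P -> Prop) : Prop := forall x, A x -> B x.

(* a strictly increasing chain  N = c 0 < c 1 < ... < c k = T  of R-submodules
   of P, i.e. a chain of length k of submodules of the module T/N *)
Definition submod_chain (N T : P -> Prop) (k : nat) : Prop :=
  exists c : nat -> P -> Prop,
    [/\ (forall x, c 0%N x <-> N x), (forall x, c k x <-> T x),
        (forall i, (i <= k)%N -> is_submod (c i)) &
        (forall i, (i < k)%N -> subsetP (c i) (c i.+1) /\ ~ subsetP (c i.+1) (c i))].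

(* length_R (T/N) = l  (for N <= T submodules): maximal chain length is l *)
Definition module_length (N T : P -> Prop) (l : nat) : Prop :=
  submod_chain N T l /\ ~ submod_chain N T l.+1.
End Alg.

Section Det.
Variables (R : idomainType) (m n : nat).

Local Notation P := {mpoly R[m * n]}.

Definition var_idx (i : 'I_m) (j : 'I_n) : 'I_(m * n) := mxvec_index i j.

Definition genericmx : 'M[P]_(m, n) := \matrix_(i, j) 'X_(var_idx i j).

Definition kminors (k : nat) (M : 'M[P]_(m, n)) : P -> Prop :=
  fun f => exists (r : 'I_k -> 'I_m) (c : 'I_k -> 'I_n),
    [/\ injective r, injective c & f = \det (\matrix_(i, j) M (r i) (c j))].

Definition evalmx (a : 'M[R]_(m, n)) (f : P) : R :=
  f.@[fun v : 'I_(m * n) => mxvec a 0 v].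
End Det.

(* Main.v *)
Require Import Defs.
From HB Require Import structures.
From mathcomp Require Import all_boot all_order all_algebra.
From mathcomp Require Import mpoly.
From mathcomp Require Import ring zify.
From Stdlib Require Import ClassicalEpsilon.
Import Order.TTheory GRing.Theory Num.Theory.
Local Open Scope ring_scope.
Set Implicit Arguments. Unset Strict Implicit. Unset Printing Implicit Defensive.

Section Main.
Variables (R : idomainType) (pi : R) (t n : nat) (a : nat -> nat) (w : nat).
Local Notation m := t.+1.
Local Notation P := {mpoly R[m * n]}.

Definition ab : 'M[R]_(m, n) :=
  \matrix_(i, j) (if ((i < t)%N && (nat_of_ord i == nat_of_ord j %% t)%N) then pi ^+ a i else 0).
Definition av (v : 'I_(m * n)) : R := mxvec ab 0 v.
Definition ev (f : P) : R := f.@[av].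
Definition dd (u : 'I_(m * n)) (f : P) : R := (mderiv u f).@[av].

Lemma evD f g : ev (f + g) = ev f + ev g. Proof. exact: mevalD. Qed.
Lemma evM f g : ev (f * g) = ev f * ev g. Proof. exact: mevalM. Qed.
Lemma evZ c f : ev (c *: f) = c * ev f. Proof. exact: mevalZ. Qed.
Lemma evC c : ev c%:MP = c. Proof. exact: mevalC. Qed.
Lemma evX u : ev 'X_u = av u. Proof. exact: mevalXU. Qed.
Lemma ddD u f g : dd u (f + g) = dd u f + dd u g.
Proof. by rewrite /dd mderivD mevalD. Qed.
Lemma ddZ u c f : dd u (c *: f) = c * dd u f.
Proof. by rewrite /dd mderivZ mevalZ. Qed.
Lemma ddM u f g : dd u (f * g) = dd u f * ev g + ev f * dd u g.
Proof. by rewrite /dd mderivM mevalD !mevalM. Qed.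
Lemma ddC u c : dd u c%:MP = 0.
Proof. by rewrite /dd mderivC meval0. Qed.
Lemma ddX u v : dd u 'X_v = (u == v)%:R.
Proof.
rewrite /dd mderivX mnm1E mevalZ mevalX eq_sym.
case: (u =P v) => [->|_]; last by rewrite mul0r.
rewrite mul1r big1 // => i _. by rewrite mnmBE subnn expr0.
Qed.
Lemma ev_sum (I : finType) (F : I -> P) : ev (\sum_i F i) = \sum_i ev (F i).
Proof. by rewrite /ev (raddf_sum (meval av)). Qed.
Lemma dd_sum u (I : finType) (F : I -> P) : dd u (\sum_i F i) = \sum_i dd u (F i).
Proof. by rewrite /dd (raddf_sum (mderiv u)) (raddf_sum (meval av)). Qed.
Lemma evN f : ev (- f) = - ev f. Proof. exact: mevalN. Qed.
Lemma ddN u f : dd u (- f) = - dd u f. Proof. by rewrite /dd mderivN mevalN. Qed.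
Lemma evB f g : ev (f - g) = ev f - ev g. Proof. by rewrite evD evN. Qed.
Lemma ddB u f g : dd u (f - g) = dd u f - dd u g. Proof. by rewrite ddD ddN. Qed.

Definition qq (f : P) := ev f = 0.
Definition gens (f : P) := (exists x y, [/\ qq x, qq y & f = x * y])
                               \/ kminors m (@genericmx R m n) f.
Definition NN := ideal_gen gens.

Lemma NN_ideal : is_ideal NN.
Proof.
split.
- by move=> J [] ? _ _ _.
- by move=> x y Hx Hy J HJ Hg; case: (HJ) => _ HD _; apply: HD; [apply: Hx|apply: Hy].
- by move=> g x Hx J HJ Hg; case: (HJ) => _ _ HM; apply: HM; apply: Hx.
Qed.
Lemma NN_gen f : gens f -> NN f.
Proof. by move=> Hf J _ HJ; apply: HJ. Qed.
Lemma NN_ind (J : P -> Prop) : is_ideal J -> (forall f, gens f -> J f) -> forall f, NN f -> J f.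
Proof. by move=> HJ Hg f Hf; apply: Hf. Qed.
Lemma NN0 : NN 0. Proof. by case: NN_ideal. Qed.
Lemma NND f g : NN f -> NN g -> NN (f + g). Proof. by case: NN_ideal => _ H _; apply: H. Qed.
Lemma NNM g f : NN f -> NN (g * f). Proof. by case: NN_ideal => _ _ H; apply: H. Qed.
Lemma NNMr g f : NN f -> NN (f * g). Proof. by rewrite mulrC; apply: NNM. Qed.
Lemma NNZ c f : NN f -> NN (c *: f). Proof. by rewrite -mul_mpolyC; apply: NNM. Qed.
Lemma NNN f : NN f -> NN (- f).
Proof. by move=> H; rewrite -scaleN1r; apply: NNZ. Qed.
Lemma NNB f g : NN f -> NN g -> NN (f - g).
Proof. by move=> Hf Hg; apply: NND => //; apply: NNN. Qed.
Lemma NN_sum (I : finType) (F : I -> P) : (forall i, NN (F i)) -> NN (\sum_i F i).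
Proof. by move=> H; apply: (big_ind NN) => //; [exact: NN0 | exact: NND]. Qed.

Definition Y (u : 'I_(m * n)) : P := 'X_u - (av u)%:MP.
Lemma evY u : ev (Y u) = 0. Proof. by rewrite /Y evB evX evC subrr. Qed.
Lemma ddY v u : dd v (Y u) = (v == u)%:R. Proof. by rewrite /Y ddB ddX ddC subr0. Qed.

Definition lpart (f : P) : P := \sum_u dd u f *: Y u.
Definition lin (f : P) : P := (ev f)%:MP + lpart f.
Lemma ev_lpart f : ev (lpart f) = 0.
Proof. by rewrite ev_sum big1 // => u _; rewrite evZ evY mulr0. Qed.
Lemma dd_lpart v f : dd v (lpart f) = dd v f.
Proof.
rewrite dd_sum (bigD1 v) //= big1 ?addr0; first by rewrite ddZ ddY eqxx mulr1.
by move=> u /negbTE Hu; rewrite ddZ ddY eq_sym Hu mulr0.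
Qed.
Lemma lpartD f g : lpart (f + g) = lpart f + lpart g.
Proof. by rewrite /lpart -big_split; apply: eq_bigr => u _; rewrite ddD scalerDl. Qed.
Lemma lpartZ c f : lpart (c *: f) = c *: lpart f.
Proof. by rewrite /lpart scaler_sumr; apply: eq_bigr => u _; rewrite ddZ scalerA. Qed.
Lemma lpartM f g : lpart (f * g) = ev g *: lpart f + ev f *: lpart g.
Proof.
rewrite /lpart !scaler_sumr -big_split; apply: eq_bigr => u _.
by rewrite ddM !scalerA scalerDl mulrC [ev f * _]mulrC.
Qed.
Lemma qq_lpart f : qq (lpart f). Proof. exact: ev_lpart. Qed.

Definition Good (f : P) := NN (f - lin f).
Lemma linD f g : lin (f + g) = lin f + lin g.
Proof. by rewrite /lin evD lpartD rmorphD addrACA. Qed.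
Lemma linZ c f : lin (c *: f) = c *: lin f.
Proof. by rewrite /lin evZ lpartZ scalerDr mpolyCM mul_mpolyC. Qed.
Lemma GoodD f g : Good f -> Good g -> Good (f + g).
Proof.
rewrite /Good linD => Hf Hg.
have -> : f + g - (lin f + lin g) = (f - lin f) + (g - lin g) by rewrite opprD addrACA.
exact: NND.
Qed.
Lemma GoodZ c f : Good f -> Good (c *: f).
Proof. by rewrite /Good linZ -scalerBr; apply: NNZ. Qed.
Lemma GoodC c : Good c%:MP.
Proof.
rewrite /Good /lin evC /lpart big1 ?addr0 ?subrr; first exact: NN0.
by move=> u _; rewrite ddC scale0r.
Qed.
Lemma GoodX u : Good 'X_u.
Proof.
rewrite /Good /lin evX /lpart (bigD1 u) //= big1 ?addr0.
  rewrite ddX eqxx scale1r /Y.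
  have -> : 'X_u - ((av u)%:MP + ('X_u - (av u)%:MP)) = 0 :> P by ring.
  exact: NN0.
by move=> v /negbTE Hv; rewrite ddX Hv scale0r.
Qed.
Lemma GoodM f g : Good f -> Good g -> Good (f * g).
Proof.
rewrite /Good => Hf Hg.
have -> : f * g - lin (f * g) = (f - lin f) * g + lin f * (g - lin g) + lpart f * lpart g.
  rewrite /lin lpartM evM -!mul_mpolyC rmorphM.
  set A := (ev f)%:MP; set B := (ev g)%:MP; set lf := lpart f; set lg := lpart g.
  ring.
apply: NND; first by apply: NND; [apply: NNMr | apply: NNM].
apply: NN_gen; left; exists (lpart f), (lpart g); split=> //; exact: qq_lpart.
Qed.
Lemma Good1 : Good 1.
Proof. by rewrite -(mpolyC1 _ R) ; exact: GoodC. Qed.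
Lemma Good_all f : Good f.
Proof.
elim/mpolyind: f => [|c mm p _ _ Hp]; first by have := GoodC 0; rewrite raddf0.
apply: GoodD => //; apply: GoodZ; rewrite mpolyXE_id.
apply: (big_ind Good); [exact: Good1 | exact: GoodM |] => i _.
elim: (mm i) => [|k IH]; first by rewrite expr0; exact: Good1.
by rewrite exprS; apply: GoodM => //; exact: GoodX.
Qed.
Lemma taylor f : qq f -> NN (f - lpart f).
Proof.
move=> Hf; have := Good_all f; rewrite /Good /lin.
by rewrite Hf rmorph0 add0r.
Qed.
Lemma taylor0 f : qq f -> (forall u, dd u f = 0) -> NN f.
Proof.
move=> Hf H0; have := taylor Hf; rewrite /lpart big1 ?subr0 //.
by move=> u _; rewrite H0 scale0r.
Qed.

Lemma var_idx_inj (i i' : 'I_m) (j j' : 'I_n) :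
  var_idx i j = var_idx i' j' -> i = i' /\ j = j'.
Proof.
rewrite /var_idx /mxvec_index => /cast_ord_inj /enum_rank_inj [-> ->]; by split.
Qed.
Lemma av_var i j : av (var_idx i j) = ab i j. Proof. exact: mxvecE. Qed.
Lemma ab_last j : ab ord_max j = 0.
Proof. by rewrite mxE ltnn. Qed.
Lemma ab_top (i : 'I_m) j : (i < t)%N -> ab i j = pi ^+ a i * (nat_of_ord i == j %% t)%N%:R.
Proof. by move=> Hi; rewrite mxE Hi /=; case: eqP => _; rewrite ?mulr1 ?mulr0. Qed.

Definition lv (j : 'I_n) : 'I_(m * n) := var_idx ord_max j.

Definition Dmat : 'M[R]_t := \matrix_(i < t, j < t) (if i == j then pi ^+ a i else 0).
Definition Delta := \det Dmat.
Lemma Delta_prod : Delta = \prod_(i < t) pi ^+ a i.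
Proof.
rewrite /Delta (_ : Dmat = diag_mx (\row_i pi ^+ a i)); first by rewrite det_diag; apply: eq_bigr => i _; rewrite mxE.
by apply/matrixP => i j; rewrite !mxE eq_sym; case: eqP => // ->.
Qed.

Lemma cofactor_rowE (A B : 'M[R]_m) i0 k :
  (forall i j, i != i0 -> A i j = B i j) -> cofactor A i0 k = cofactor B i0 k.
Proof.
move=> H; rewrite /cofactor; congr (_ * \det _).
by apply/matrixP => x y; rewrite !mxE H // eq_sym neq_lift.
Qed.

Section Minor.
Variables (r : 'I_m -> 'I_m) (c : 'I_m -> 'I_n) (i0 : 'I_m).
Hypotheses (rinj : injective r) (cinj : injective c) (ri0 : r i0 = ord_max).
Definition MX : 'M[P]_m := \matrix_(i, j) (@genericmx R m n) (r i) (c j).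
Definition N0 : 'M[R]_m := \matrix_(i, k) ab (r i) (c k).

Lemma map_MX : map_mx (meval av) MX = N0.
Proof. by apply/matrixP => i j; rewrite !mxE mevalXU /av mxvecE mxE. Qed.

Lemma dd_minor u : dd u (\det MX) =
  \sum_k (u == var_idx ord_max (c k))%:R * cofactor N0 i0 k.
Proof.
rewrite (expand_det_row _ i0) dd_sum; apply: eq_bigr => k _.
rewrite ddM {2}/MX !mxE ri0 ddX /ev mevalXU av_var ab_last mul0r addr0.
by rewrite -map_MX cofactor_map_mx.
Qed.

Lemma ev_minor : ev (\det MX) = 0.
Proof.
rewrite /ev -det_map_mx map_MX (expand_det_row _ i0) big1 // => k _.
by rewrite mxE ri0 ab_last mul0r.
Qed.

Lemma cof_div k : exists x, cofactor N0 i0 k = x * Delta.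
Proof.
pose N1 : 'M[R]_m := \matrix_(i, l) if i == i0 then (l == k)%:R else N0 i l.
have -> : cofactor N0 i0 k = cofactor N1 i0 k.
  by apply: cofactor_rowE => i j Hi; rewrite /N1 !mxE (negbTE Hi).
have -> : cofactor N1 i0 k = \det N1.
  rewrite (expand_det_row _ i0) (bigD1 k) //= big1 ?addr0.
    by rewrite mxE !eqxx mul1r.
  by move=> l /negbTE Hl; rewrite mxE eqxx Hl mul0r.
pose dv : 'rV[R]_m := \row_i (if i == i0 then 1 else pi ^+ a (r i)).
pose B : 'M[R]_m := \matrix_(i, l) if i == i0 then (l == k)%:R
                                   else (nat_of_ord (r i) == c l %% t)%N%:R.
have -> : N1 = diag_mx dv *m B.
  rewrite mul_diag_mx; apply/matrixP => i l; rewrite !mxE.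
  case: eqP => [_|/eqP Hi]; first by rewrite mul1r.
  have Hr : (r i < t)%N.
    have : r i != ord_max by rewrite -ri0 (inj_eq rinj).
    rewrite -val_eqE /= => H; have := ltn_ord (r i).
    by rewrite ltnS leq_eqVlt (negbTE H).
  by rewrite Hr /=; case: eqP => _; rewrite ?mulr1 ?mulr0.
exists (\det B); rewrite det_mulmx det_diag mulrC; congr (_ * _).
rewrite Delta_prod.
pose g (x : 'I_m) := if x == ord_max then 1 else pi ^+ a x.
rewrite (eq_bigr (fun i => g (r i))); last first.
  by move=> i _; rewrite mxE /g -ri0 (inj_eq rinj).
transitivity (\prod_(x < m) g x); first by rewrite [RHS](reindex_inj rinj).
rewrite big_ord_recr /= /g eqxx mulr1.
apply: eq_bigr => i _.
rewrite (_ : widen_ord _ i == ord_max = false) //.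
by apply/negbTE; rewrite -val_eqE /= neq_ltn ltn_ord.
Qed.

Lemma minor_off i j : i != ord_max -> dd (var_idx i j) (\det MX) = 0.
Proof.
move=> Hi; rewrite dd_minor big1 // => k _.
case: eqP => [/var_idx_inj [E _]|_]; last by rewrite mul0r.
by rewrite E eqxx in Hi.
Qed.

Lemma minor_div j : exists x, dd (lv j) (\det MX) = x * Delta.
Proof.
rewrite dd_minor.
apply: (big_ind (fun v => exists x, v = x * Delta)).
- by exists 0; rewrite mul0r.
- by move=> _ _ [x ->] [y ->]; exists (x + y); rewrite mulrDl.
move=> k _; have [x ->] := cof_div k.
by exists ((lv j == var_idx ord_max (c k))%:R * x); rewrite mulrA.
Qed.

Lemma minor_sum (r0 : 'I_m) : (r0 < t)%N ->
  \sum_(j < n) dd (lv j) (\det MX) * ab r0 j = 0.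
Proof.
move=> Hr0.
under eq_bigr => j _ do rewrite dd_minor big_distrl.
rewrite exchange_big /=.
under eq_bigr => k _.
  rewrite (bigD1 (c k)) //= big1 ?addr0; last first.
    move=> j Hj; case: eqP => [/var_idx_inj [_ E]|_]; last by rewrite !mul0r.
    by rewrite E eqxx in Hj.
  rewrite eqxx mul1r mulrC.
over.
pose N0' : 'M[R]_m := \matrix_(i, l) if i == i0 then ab r0 (c l) else N0 i l.
transitivity (\det N0').
  rewrite (expand_det_row _ i0); apply: eq_bigr => k _.
  rewrite [N0' i0 k]mxE eqxx; congr (_ * _); apply: cofactor_rowE => i l Hi.
  by rewrite /N0' [RHS]mxE (negbTE Hi).
pose i1 := invF rinj r0.
have ri1 : r i1 = r0 by rewrite /i1 f_invF.
apply: (@determinant_alternate _ _ _ i0 i1).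
  apply/eqP => E; move: ri1; rewrite -E ri0 => E2.
  by move: Hr0; rewrite -E2 /= ltnn.
move=> l; rewrite !mxE eqxx.
have -> : (i1 == i0) = false.
  apply/negbTE/eqP => E; move: ri1; rewrite E ri0 => E2.
  by move: Hr0; rewrite -E2 /= ltnn.
by rewrite ri1.
Qed.
End Minor.

Definition inK (f : P) := [/\ ev f = 0,
  (forall i j, i != ord_max -> dd (var_idx i j) f = 0) &
  (forall r0 : 'I_m, (r0 < t)%N -> \sum_(j < n) dd (lv j) f * ab r0 j = 0)].
Definition pdiv (k : nat) (x : R) := exists y, x = y * pi ^+ k.
Definition Pred (f : P) := inK f /\ forall j, pdiv w (dd (lv j) f).

Lemma inK0 : inK 0.
Proof.
split; first by rewrite /ev meval0.
- by move=> i j _; rewrite /dd mderiv0 meval0.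
- by move=> r0 _; rewrite big1 // => j _; rewrite /dd mderiv0 meval0 mul0r.
Qed.
Lemma inKD f g : inK f -> inK g -> inK (f + g).
Proof.
move=> [f1 f2 f3] [g1 g2 g3]; split; first by rewrite evD f1 g1 addr0.
- by move=> i j Hi; rewrite ddD f2 // g2 // addr0.
- move=> r0 Hr; under eq_bigr => j _ do rewrite ddD mulrDl.
  by rewrite big_split /= f3 // g3 // addr0.
Qed.
Lemma inKM g f : inK f -> inK (g * f).
Proof.
move=> [f1 f2 f3]; split; first by rewrite evM f1 mulr0.
- by move=> i j Hi; rewrite ddM f1 f2 // !mulr0 addr0.
- move=> r0 Hr; under eq_bigr => j _ do rewrite ddM f1 mulr0 add0r -mulrA.
  by rewrite -big_distrr /= f3 // mulr0.
Qed.
Lemma inKZ c f : inK f -> inK (c *: f).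
Proof. by rewrite -mul_mpolyC; apply: inKM. Qed.
Lemma inKB f g : inK f -> inK g -> inK (f - g).
Proof. by move=> Hf Hg; apply: inKD => //; rewrite -scaleN1r; apply: inKZ. Qed.
Lemma inK_sum (I : finType) (F : I -> P) : (forall i, inK (F i)) -> inK (\sum_i F i).
Proof. by move=> H; apply: (big_ind inK) => //; [exact: inK0 | exact: inKD]. Qed.

Section Hyps.
Hypotheses (Hpi : is_dvr_uniformiser pi) (Ht0 : (0 < t)%N) (Htn : (t < n)%N) (Hw : dvr_val pi Delta w).

Lemma Pred_ideal : is_ideal Pred.
Proof.
split.
- split; first exact: inK0.
  by move=> j; exists 0; rewrite /dd mderiv0 meval0 mul0r.
- move=> f g [Hf Df] [Hg Dg]; split; first exact: inKD.
  move=> j; have [x Hx] := Df j; have [y Hy] := Dg j.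
  by exists (x + y); rewrite ddD Hx Hy mulrDl.
- move=> g f [Hf Df]; split; first exact: inKM.
  move=> j; have [x Hx] := Df j; case: (Hf) => f1 _ _.
  by exists (ev g * x); rewrite ddM f1 mulr0 add0r Hx mulrA.
Qed.

Lemma gens_Pred f : gens f -> Pred f.
Proof.
case=> [[x [y [Hx Hy ->]]]|[r [c [rinj cinj ->]]]].
  rewrite /qq in Hx Hy; split; first split.
  - by rewrite evM Hx mul0r.
  - by move=> i j _; rewrite ddM Hx Hy mulr0 mul0r addr0.
  - by move=> r0 _; rewrite big1 // => j _; rewrite ddM Hx Hy mulr0 mul0r addr0 mul0r.
  by move=> j; exists 0; rewrite ddM Hx Hy mulr0 !mul0r addr0.
pose i0 := invF rinj ord_max.
have ri0 : r i0 = ord_max by rewrite /i0 f_invF.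
have -> : \det (\matrix_(i, j) genericmx R m n (r i) (c j)) = \det (MX r c) by [].
split; first split.
- exact: ev_minor ri0.
- by move=> i j Hi; apply: (minor_off c ri0).
- by move=> r0 Hr; apply: (minor_sum c rinj ri0).
move=> j; have [x ->] := minor_div c rinj ri0 j.
case: Hw => u _ ->; by exists (x * u); rewrite mulrA.
Qed.

Lemma NN_Pred f : NN f -> Pred f.
Proof. by apply: NN_ind; [exact: Pred_ideal | exact: gens_Pred]. Qed.

Lemma pi_neq0 : pi != 0. Proof. by case: Hpi. Qed.
Lemma fcol_proof (p : 'I_(n - t)) : (t + p < n)%N.
Proof. have := ltn_ord p; lia. Qed.
Definition fcol (p : 'I_(n - t)) : 'I_n := Ordinal (fcol_proof p).
Lemma lv_inj : injective lv.
Proof. by move=> j j' /var_idx_inj []. Qed.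

Lemma free_all f : (forall p : 'I_(n - t), dd (lv (fcol p)) f = 0) ->
  forall j' : 'I_n, (t <= j')%N -> dd (lv j') f = 0.
Proof.
move=> H0 j' Hj'; have Hp : (j' - t < n - t)%N by have := ltn_ord j'; lia.
have -> : j' = fcol (Ordinal Hp) by apply: val_inj => /=; lia.
exact: H0.
Qed.

Lemma base f : inK f -> (forall p : 'I_(n - t), dd (lv (fcol p)) f = 0) ->
  forall u, dd u f = 0.
Proof.
move=> [f1 f2 f3] H0 u; case/mxvec_indexP: u => i j.
change (mxvec_index i j) with (var_idx i j).
case: (eqVneq i ord_max) => [->|Hi]; last exact: f2.
have Hfree := free_all H0.
case: (leqP t j) => Hj; first exact: Hfree.
pose r0 : 'I_m := Ordinal (leq_trans Hj (leqnSn t)).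
have := f3 r0 Hj; rewrite (bigD1 j) //= big1 ?addr0.
  rewrite ab_top //= (modn_small Hj) eqxx mulr1 => /eqP.
  by rewrite mulf_eq0 expf_eq0 (negbTE pi_neq0) andbF orbF => /eqP.
move=> j' Hj'; case: (leqP t j') => Hj'2; first by rewrite Hfree // mul0r.
rewrite ab_top //= (modn_small Hj'2).
by rewrite (_ : (j == j' :> nat) = false) ?mulr0 //; apply/negbTE; rewrite eq_sym.
Qed.

Definition cc (j : 'I_n) (k : 'I_m) : 'I_n := if k == ord_max then j else insubd j k.
Lemma cc_val j k : k != ord_max -> (cc j k : nat) = k.
Proof.
move=> Hk; rewrite /cc (negbTE Hk) val_insubd.
have : (k < t)%N.
  move: Hk; rewrite -val_eqE /= => H; have := ltn_ord k.
  by rewrite ltnS leq_eqVlt (negbTE H).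
by move=> Hkt; rewrite (ltn_trans Hkt Htn).
Qed.
Lemma cc_lt j k : k != ord_max -> (cc j k < t)%N.
Proof.
move=> Hk; rewrite cc_val //; move: Hk; rewrite -val_eqE /= => H; have := ltn_ord k.
by rewrite ltnS leq_eqVlt (negbTE H).
Qed.
Lemma cc_inj (j : 'I_n) : (t <= j)%N -> injective (cc j).
Proof.
move=> Hj k k'.
case: (eqVneq k ord_max) => [->|Hk]; case: (eqVneq k' ord_max) => [->|Hk'] //.
- move=> E; have := cc_lt j Hk'; rewrite -E /cc eqxx; lia.
- move=> E; have := cc_lt j Hk; rewrite E /cc eqxx; lia.
- by move/(congr1 (@nat_of_ord n)); rewrite !cc_val // => /val_inj.
Qed.

Lemma cof_spec (j : 'I_n) : (t <= j)%N -> cofactor (N0 id (cc j)) ord_max ord_max = Delta.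
Proof.
move=> Hj; rewrite /cofactor -signr_odd addnn odd_double expr0 mul1r.
congr (\det _); apply/matrixP => x y; rewrite !mxE.
have Hy : lift ord_max y != ord_max by rewrite eq_sym neq_lift.
have Hcc := cc_val j Hy; rewrite lift_max in Hcc.
rewrite Hcc lift_max (modn_small (ltn_ord y)) ltn_ord /=.
by case: eqP => [/val_inj ->|Hne]; [rewrite eqxx | case: eqP => // E; case: Hne; rewrite E].
Qed.

Lemma dd_spec (j : 'I_n) : (t <= j)%N -> forall j' : 'I_n, (t <= j')%N ->
  dd (lv j') (\det (MX id (cc j))) = (j' == j)%:R * Delta.
Proof.
move=> Hj j' Hj'; rewrite (dd_minor (r := id) (cc j) (i0 := ord_max)) //.
rewrite (bigD1 ord_max) //= big1 ?addr0.
  by rewrite /cc eqxx (inj_eq lv_inj) cof_spec.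
move=> k Hk; case: eqP => [E|_]; last by rewrite mul0r.
have := cc_lt j Hk; move/lv_inj: E => <-; lia.
Qed.

Lemma spec_NN (j : 'I_n) : (t <= j)%N -> NN (\det (MX id (cc j))).
Proof.
move=> Hj; apply: NN_gen; right; exists id, (cc j); split => //; exact: cc_inj.
Qed.
Lemma spec_inK (j : 'I_n) : (t <= j)%N -> inK (\det (MX id (cc j))).
Proof. by move=> Hj; case: (NN_Pred (spec_NN Hj)). Qed.

Lemma NN_char f : NN f <-> inK f /\ forall p : 'I_(n - t), pdiv w (dd (lv (fcol p)) f).
Proof.
split.
  by move/NN_Pred => [H1 H2]; split.
move=> [Hf Hd]; have [u uU Du] := Hw.
have Hd' p : exists y, dd (lv (fcol p)) f == y * pi ^+ w.
  by have [y ->] := Hd p; exists y.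
pose y p := xchoose (Hd' p).
have Hy p : dd (lv (fcol p)) f = y p * pi ^+ w by apply/eqP; exact: (xchooseP (Hd' p)).
have Ht p : (t <= fcol p)%N by rewrite /= leq_addr.
pose g := \sum_p (y p * u^-1) *: \det (MX id (cc (fcol p))).
have Hg : NN g by apply: NN_sum => p; apply: NNZ; apply: spec_NN.
have Hgk : inK g by apply: inK_sum => p; apply: inKZ; apply: spec_inK.
have -> : f = (f - g) + g by rewrite subrK.
apply: NND => //; have Hh : inK (f - g) by apply: inKB.
apply: taylor0; first by case: Hh.
apply: base => // p.
rewrite ddB dd_sum (bigD1 p) //= big1 ?addr0.
  rewrite ddZ dd_spec // eqxx mul1r Du Hy mulrA -(mulrA _ _ u) mulVr // mulr1.
  by rewrite subrr.
move=> p' Hp'; rewrite ddZ dd_spec //.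
rewrite (_ : (fcol p == fcol p') = false) ?mul0r ?mulr0 //.
apply/negbTE; apply: contra Hp' => /eqP /(congr1 (@nat_of_ord n)) /= E.
by apply/eqP/val_inj; rewrite /=; lia.
Qed.

Lemma inK_cancel c f : c != 0 -> inK (c *: f) -> inK f.
Proof.
move=> Hc [f1 f2 f3]; split.
- by move/eqP: f1; rewrite evZ mulf_eq0 (negbTE Hc) => /eqP.
- by move=> i j Hi; have /eqP := f2 i j Hi; rewrite ddZ mulf_eq0 (negbTE Hc) => /eqP.
- move=> r0 Hr; have /eqP := f3 r0 Hr.
  under eq_bigr => j _ do rewrite ddZ -mulrA.
  by rewrite -big_distrr /= mulf_eq0 (negbTE Hc) => /eqP.
Qed.

Lemma T_char f : (qq f /\ exists2 c : R, c != 0 & NN (c *: f)) <-> inK f.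
Proof.
split.
  by move=> [_ [c Hc /NN_char [H _]]]; apply: inK_cancel H.
move=> Hf; split; first by case: Hf.
exists (pi ^+ w); first by rewrite expf_neq0 // pi_neq0.
apply/NN_char; split; first exact: inKZ.
by move=> p; exists (dd (lv (fcol p)) f); rewrite ddZ mulrC.
Qed.

Local Notation d := (n - t)%N.
Definition z (p : 'I_d) (f : P) := dd (lv (fcol p)) f.
Definition TT (f : P) := inK f.

Lemma pdiv0 k : pdiv k 0. Proof. by exists 0; rewrite mul0r. Qed.
Lemma pdivD k x y : pdiv k x -> pdiv k y -> pdiv k (x + y).
Proof. by move=> [a1 ->] [b1 ->]; exists (a1 + b1); rewrite mulrDl. Qed.
Lemma pdivM k c x : pdiv k x -> pdiv k (c * x).
Proof. by move=> [a1 ->]; exists (c * a1); rewrite mulrA. Qed.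
Lemma pdivW k k' x : (k' <= k)%N -> pdiv k x -> pdiv k' x.
Proof.
move=> Hk [y ->]; exists (y * pi ^+ (k - k')).
by rewrite -mulrA -exprD subnK.
Qed.
Lemma pdiv_0 x : pdiv 0 x. Proof. by exists x; rewrite expr0 mulr1. Qed.
Lemma nodiv e : ~ pdiv e.+1 (pi ^+ e).
Proof.
move=> [y /eqP]; rewrite exprS mulrA -subr_eq0 -{1}(mul1r (pi ^+ e)) -mulrBl.
rewrite mulf_eq0 expf_eq0 (negbTE pi_neq0) andbF orbF subr_eq0 => /eqP E.
case: Hpi => _ /negP H _; apply: H; apply/unitrP; exists y.
by split; [rewrite E | rewrite mulrC E].
Qed.

Lemma zD p f g : z p (f + g) = z p f + z p g. Proof. exact: ddD. Qed.
Lemma zZ p c f : z p (c *: f) = c * z p f. Proof. exact: ddZ. Qed.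

Lemma sum_delta (A : 'I_n) (x : 'I_n -> R) : \sum_j (j == A)%:R * x j = x A.
Proof.
rewrite (bigD1 A) //= eqxx mul1r big1 ?addr0 // => j /negbTE ->; by rewrite mul0r.
Qed.

Definition rcol (p : 'I_d) : 'I_n := insubd (fcol p) (fcol p %% t)%N.
Lemma rcol_val p : (rcol p : nat) = (fcol p %% t)%N.
Proof.
by rewrite /rcol val_insubd (leq_ltn_trans (leq_mod _ _) (ltn_ord _)).
Qed.
Definition hh (p : 'I_d) : P := Y (lv (fcol p)) - Y (lv (rcol p)).
Lemma fcol_inj : injective fcol.
Proof. by move=> p p' /(congr1 (@nat_of_ord n)) /= E; apply: val_inj => /=; lia. Qed.
Lemma rcol_lt p : (rcol p < t)%N.
Proof. by rewrite rcol_val ltn_mod. Qed.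

Lemma dd_hh u p : dd u (hh p) = (u == lv (fcol p))%:R - (u == lv (rcol p))%:R.
Proof. by rewrite /hh ddB !ddY. Qed.

Lemma inK_hh p : inK (hh p).
Proof.
split; first by rewrite /hh evB !evY subrr.
- move=> i j Hi; rewrite dd_hh.
  have F (j' : 'I_n) : (var_idx i j == lv j') = false.
    by apply/negbTE/eqP => /var_idx_inj [E _]; rewrite E eqxx in Hi.
  by rewrite !F subrr.
- move=> r0 Hr; under eq_bigr => j _ do rewrite dd_hh !(inj_eq lv_inj) mulrBl.
  rewrite sumrB !sum_delta !ab_top // rcol_val modn_mod.
  by rewrite subrr.
Qed.

Lemma z_hh p' p : z p' (hh p) = (p' == p)%:R.
Proof.
rewrite /z dd_hh !(inj_eq lv_inj) (inj_eq fcol_inj).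
rewrite (_ : (fcol p' == rcol p) = false) ?subr0 //.
apply/negbTE/eqP => /(congr1 (@nat_of_ord n)); have := rcol_lt p; rewrite /=; lia.
Qed.

Definition ex (i : nat) (p : 'I_d) : nat := (w - minn w (i - p * w))%N.
Definition cc_ch (i : nat) (f : P) := inK f /\ forall p : 'I_d, pdiv (ex i p) (z p f).

Lemma cc_sub i : is_submod (R := R) (cc_ch i).
Proof.
split.
- by split; [exact: inK0 | move=> p; rewrite /z /dd mderiv0 meval0; exact: pdiv0].
- move=> f g [Hf Df] [Hg Dg]; split; first exact: inKD.
  by move=> p; rewrite zD; apply: pdivD.
- move=> c f [Hf Df]; split; first exact: inKZ.
  by move=> p; rewrite zZ; apply: pdivM.
Qed.

Lemma cc_mono i f : cc_ch i f -> cc_ch i.+1 f.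
Proof.
move=> [Hf Df]; split => // p; apply: pdivW (Df p); rewrite /ex; lia.
Qed.

Lemma cc0 f : cc_ch 0 f <-> NN f.
Proof.
rewrite NN_char /cc_ch /ex; split => [] [H1 H2]; split => // p; have := H2 p;
by rewrite sub0n minn0 subn0.
Qed.

Lemma ccT f : cc_ch (d * w) f <-> inK f.
Proof.
split; first by case.
move=> Hf; split => // p; rewrite /ex.
rewrite (_ : (w - minn w (d * w - p * w))%N = 0%N); first exact: pdiv_0.
have := ltn_ord p; rewrite -/d => Hp.
case: (posnP w) => [->|Hw0]; first by rewrite sub0n.
have : (p.+1 * w <= d * w)%N by rewrite leq_mul2r Hp orbT.
rewrite mulSn; lia.
Qed.

Lemma cc_strict i : (i < d * w)%N -> exists f, cc_ch i.+1 f /\ ~ cc_ch i f.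
Proof.
move=> Hi.
have Hw0 : (0 < w)%N by case: (posnP w) => // E; rewrite E muln0 in Hi.
have Hp : (i %/ w < d)%N by rewrite ltn_divLR.
pose p0 : 'I_d := Ordinal Hp.
have Ei := divn_eq i w; have Mi := ltn_pmod i Hw0.
exists (pi ^+ ex i.+1 p0 *: hh p0); split.
  split; first by apply: inKZ; apply: inK_hh.
  move=> p; rewrite zZ z_hh; case: eqP => [->|_]; last by rewrite mulr0; exact: pdiv0.
  by rewrite mulr1; exists 1; rewrite mul1r.
move=> [_ /(_ p0)]; rewrite zZ z_hh eqxx mulr1.
have -> : ex i p0 = (ex i.+1 p0).+1 by rewrite /ex /=; lia.
exact: nodiv.
Qed.

(* ---------- upper bound via a potential ---------- *)
Definition pb (Q : Prop) : bool := if excluded_middle_informative Q then true else false.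
Lemma pbP Q : reflect Q (pb Q).
Proof. by rewrite /pb; case: excluded_middle_informative => H; constructor. Qed.

Definition wit (p : 'I_d) (S : P -> Prop) (e : nat) :=
  exists f, [/\ S f, (forall p' : 'I_d, (p < p')%N -> z p' f = 0) & z p f = pi ^+ e].
Definition EE (p : 'I_d) (S : P -> Prop) : nat :=
  find (fun e => pb (wit p S e)) (iota 0 w.+1).

Lemma witN p (S : P -> Prop) : (forall f, NN f -> S f) -> wit p S w.
Proof.
move=> HS; have [u uU Du] := Hw.
have Hj : (t <= fcol p)%N by rewrite /= leq_addr.
exists (u^-1 *: \det (MX id (cc (fcol p)))); split.
- by apply: HS; apply: NNZ; apply: spec_NN.
- move=> p' Hp'; rewrite zZ /z dd_spec ?leq_addr //.
  rewrite (_ : (fcol p' == fcol p) = false) ?mul0r ?mulr0 //.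
  by apply/negbTE; rewrite (inj_eq fcol_inj); apply: contraTneq Hp' => ->; rewrite ltnn.
- by rewrite zZ /z dd_spec ?leq_addr // eqxx mul1r Du mulrA mulVr // mul1r.
Qed.

Lemma EE_spec p S : wit p S w -> (EE p S <= w)%N /\ wit p S (EE p S).
Proof.
move=> Hwit.
have Hhas : has (fun e => pb (wit p S e)) (iota 0 w.+1).
  apply/hasP; exists w; first by rewrite mem_iota add0n ltnSn. by apply/pbP.
have Hlt : (EE p S < w.+1)%N by rewrite /EE -[X in (_ < X)%N](size_iota 0 w.+1) -has_find.
split; first by [].
have := nth_find 0 Hhas; rewrite -/(EE p S) nth_iota // add0n.
by move/pbP.
Qed.

Lemma EE_min p S e : wit p S w -> wit p S e -> (EE p S <= e)%N.
Proof.
move=> Hw' He; have [Hle _] := EE_spec Hw'.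
case: (leqP (EE p S) e) => // Hlt.
have := before_find 0 Hlt; rewrite nth_iota; last by lia.
by rewrite add0n; move/negbT/pbP.
Qed.

Definition goodS (S : P -> Prop) :=
  [/\ is_submod (R := R) S, (forall f, NN f -> S f) & (forall f, S f -> inK f)].

Lemma submodB (S : P -> Prop) f g : is_submod (R := R) S -> S f -> S g -> S (f - g).
Proof.
case=> _ HD HZ Hf Hg; apply: HD => //; rewrite -scaleN1r; exact: HZ.
Qed.

Lemma EE_mono p S S' : goodS S -> goodS S' -> (forall f, S f -> S' f) ->
  (EE p S' <= EE p S)%N.
Proof.
move=> [_ NS _] [_ NS' _] HSS.
have [_ [f [Sf H1 H2]]] := EE_spec (witN p NS).
apply: EE_min; first exact: witN.
by exists f; split => //; apply: HSS.
Qed.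

Lemma EE_inj S S' : goodS S -> goodS S' -> (forall f, S f -> S' f) ->
  (forall p, EE p S = EE p S') -> forall f, S' f -> S f.
Proof.
move=> gS gS' HSS HE.
have [subS NS KS] := gS; have [subS' NS' KS'] := gS'.
suff H k : (k <= d)%N -> forall f, S' f -> (forall p : 'I_d, (k <= p)%N -> z p f = 0) -> S f.
  by move=> f Hf; apply: (H d) => // p; have := ltn_ord p; lia.
elim: k => [_|k IH Hk] f Hf Hz.
  apply: NS; apply: taylor0; first by case: (KS' f Hf).
  by apply: base; [exact: KS' | move=> p; apply: Hz].
pose p : 'I_d := Ordinal Hk.
have [HEle [g [Sg Hg0 Hgp]]] := EE_spec (witN p NS).
have Hdiv : pdiv (EE p S) (z p f).
  case: (eqVneq (z p f) 0) => [->|Hnz]; first exact: pdiv0.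
  have [_ _ Hdvr] := Hpi; have [e [v vU Hv]] := Hdvr _ Hnz.
  have Hwit : wit p S' e.
    exists (v^-1 *: f); split.
    - by case: subS' => _ _ HZ; apply: HZ.
    - by move=> p' Hp'; rewrite zZ Hz ?mulr0 //.
    - by rewrite zZ Hv mulrA mulVr // mul1r.
  have Hle : (EE p S <= e)%N by rewrite HE; apply: EE_min => //; exact: witN.
  by exists (v * pi ^+ (e - EE p S)); rewrite Hv -mulrA -exprD subnK.
have [y Hy] := Hdiv.
have -> : f = (f - y *: g) + y *: g by rewrite subrK.
case: (subS) => _ HD HZ; apply: HD; last exact: HZ.
apply: IH; first lia.
- by apply: submodB => //; [apply: HSS; apply: HZ].
- move=> p' Hp'; rewrite zD -scaleNr zZ.
  case: (eqVneq p' p) => [->|Hne]; first by rewrite Hy Hgp mulNr subrr.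
  rewrite Hz; last by move: Hne; rewrite -val_eqE /=; lia.
  by rewrite Hg0 ?mulr0 ?addr0 //; move: Hne; rewrite -val_eqE /=; lia.
Qed.

Definition Phi (S : P -> Prop) : nat := \sum_(p < d) (w - EE p S).

Lemma Phi_le S : (Phi S <= d * w)%N.
Proof.
rewrite /Phi; apply: (@leq_trans (\sum_(p < d) w)).
  by apply: leq_sum => p _; apply: leq_subr.
by rewrite big_const_ord iter_addn_0 mulnC.
Qed.

Lemma Phi_strict S S' : goodS S -> goodS S' -> (forall f, S f -> S' f) ->
  ~ (forall f, S' f -> S f) -> (Phi S < Phi S')%N.
Proof.
move=> gS gS' HSS Hn.
have Hmono p := EE_mono p gS gS' HSS.
have Hle p : (EE p S <= w)%N by case: (gS) => _ NS _; case: (EE_spec (witN p NS)).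
case: (boolP [exists p, (EE p S' < EE p S)%N]) => [/existsP [p Hp]|/existsPn Hall].
  rewrite /Phi (bigD1 p) //= [X in (_ < X)%N](bigD1 p) //=.
  have : (\sum_(i < d | i != p) (w - EE i S) <= \sum_(i < d | i != p) (w - EE i S'))%N.
    by apply: leq_sum => i _; have := Hmono i; lia.
  have := Hle p; move: (\sum_(i < d | i != p) (w - EE i S))%N (\sum_(i < d | i != p) (w - EE i S'))%N => a1 b1; lia.
exfalso; apply: Hn; apply: EE_inj => // p.
by apply/eqP; rewrite eqn_leq Hmono leqNgt Hall.
Qed.

Definition TTs (f : P) := qq f /\ exists2 c : R, c != 0 & NN (c *: f).

Lemma main_sec : module_length (R := R) NN TTs (d * w).
Proof.
split.
  exists cc_ch; split.
  - by move=> f; rewrite cc0.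
  - by move=> f; rewrite ccT /TTs T_char.
  - by move=> i _; apply: cc_sub.
  - move=> i Hi; split; first by move=> f; apply: cc_mono.
    by move=> H; have [f [H1 H2]] := cc_strict Hi; apply: H2; apply: H.
move=> [c [c0 ck csub cstr]].
set k := (d * w).+1 in ck csub cstr.
have up i j : (i + j <= k)%N -> forall f, c i f -> c (i + j)%N f.
  elim: j => [|j IH] Hij f Hf; first by rewrite addn0.
  rewrite addnS; apply: (proj1 (cstr _ _)); first by lia.
  by apply: IH => //; lia.
have good i : (i <= k)%N -> goodS (c i).
  move=> Hi; split; first exact: csub.
  - move=> f /c0 Hf; have := up 0%N i; rewrite add0n; apply => //.
  - move=> f Hf; have := up i (k - i)%N; rewrite subnKC // => H.
    by apply/T_char; apply/ck; apply: H.
have Hphi i : (i <= k)%N -> (i <= Phi (c i))%N.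
  elim: i => [|i IH] Hi //.
  have := Phi_strict (good i (ltnW Hi)) (good i.+1 Hi) (proj1 (cstr i Hi)) (proj2 (cstr i Hi)).
  have := IH (ltnW Hi); lia.
have := Hphi k (leqnn k); have := Phi_le (c k); rewrite /k; lia.
Qed.

Lemma unit_w_unused : exists2 u, u \is a GRing.unit & Delta = u * pi ^+ w.
Proof. exact: Hw. Qed.
End Hyps.
End Main.

Unset Implicit Arguments.

Theorem lemma5p9 (R : idomainType) (pi : R) (m n : nat)
  (a : nat -> nat) (w : nat) :
  is_dvr_uniformiser pi ->
  (2 <= m)%N -> (m <= n)%N ->
  (forall i j, (i <= j)%N -> (j < m.-1)%N -> (a i <= a j)%N) ->
  (* w = nu(Delta), Delta = det D, D = diag(pi^a_1, ..., pi^a_t) *)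
  dvr_val pi (\det (\matrix_(i < m.-1, j < m.-1)
                      (if i == j then pi ^+ a i else 0))) w ->
  let t := m.-1 in
  (* the point abold in O^{m x n} *)
  let abold : 'M[R]_(m, n) :=
    \matrix_(i, j) (if ((i < t)%N && (nat_of_ord i == nat_of_ord j %% t)%N) then pi ^+ a i else 0) in
  let lam := evalmx abold in
  (* q = ker (lambda_P : P -> O) *)
  let q : {mpoly R[m * n]} -> Prop := fun f => lam f = 0 in
  (* N = q^2 + I_m(X); then p/p^2 = q / N for p = ker lambda_A, A = P / I_m(X) *)
  let N := ideal_gen (fun f => (exists x y, [/\ q x, q y & f = x * y])
                               \/ kminors m (@genericmx R m n) f) in
  (* preimage of the torsion submodule of p/p^2 *)
  let T : {mpoly R[m * n]} -> Prop :=
    fun f => q f /\ exists2 c : R, c != 0 & N (c *: f) in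
  module_length N T ((n - t) * w)%N.
Proof.
case: m => [|t] //= Hpi Hm Hmn _ Hw.
exact: (main_sec Hpi Hm Hmn Hw).
Qed.
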